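(* Let $p$ and $q$ be distinct primes. Let $G$ be a direct product of a normal cyclic Sylow $p$-subgroup $P$ and a minimal non-abelian $q$-subgroup $Q$. Then $G$ is exponent-critical.
   Context: A finite group $G$ is exponent-critical if $\exp(G)$ is not the least common multiple of the exponents of the proper non-abelian subgroups of $G$. A minimal non-abelian group is a non-abelian group all of whose proper subgroups are abelian. *)

(* Defs.v *)
From mathcomp Require Import all_boot all_fingroup all_solvable.
Set Implicit Arguments. Unset Strict Implicit. Unset Printing Implicit Defensive.
Local Open Scope group_scope.

Definition minimal_nonabelian (gT : finGroupType) (G : {set gT}) : bool :=
  ~~ abelian G && [forall H : {group gT}, (H \proper G) ==> abelian H].

Definition exponent_critical (gT : finGroupType) (G : {set gT}) : bool :=
  exponent G != \big[lcmn/1%N]_(H : {group gT} | (H \proper G) && ~~ abelian H)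
                   exponent H.

(* Main.v *)
Require Import Defs.
From mathcomp Require Import all_boot all_fingroup all_solvable.
Local Open Scope group_scope.

Theorem mainTheorem7 (gT : finGroupType) (G P Q : {group gT}) (p q : nat) :
  prime p -> prime q -> p != q ->
  P \in 'Syl_p(G) -> P <| G -> cyclic P ->
  q.-group Q -> minimal_nonabelian Q ->
  P \x Q = G ->
  exponent_critical G.
Proof.
move=> pp pq npq sylP nPG cP qQ mnQ dG.
have sylP' : p.-Sylow(G) P by move: sylP; rewrite inE.
have pP := pHall_pgroup sylP'.
have [_ mPQ cPQ tPQ] := dprodP dG.
have [_ nQG] := dprod_normal2 dG.
have p'Q : p^'.-group Q.
  apply: sub_pgroup qQ => r; rewrite !inE => /eqP ->; by rewrite eq_sym.
have [_ hQ] := coprime_mulpG_Hall mPQ pP p'Q.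
case/andP: mnQ => nabQ /forallP mQ.
have key : forall H : {group gT}, H \proper G -> ~~ abelian H ->
    Q \subset H /\ (P :&: H) \proper P /\ exponent H %| #|P :&: H| * exponent Q.
  move=> H prH nabH.
  have sHG := proper_sub prH.
  have h1 : p.-Hall(H) (P :&: H) := setI_normal_Hall nPG sylP' sHG.
  have h2 : p^'.-Hall(H) (Q :&: H) := setI_normal_Hall nQG hQ sHG.
  have /complP [t12 m12] : (Q :&: H)%G \in [complements to (P :&: H) in H].
    by rewrite (compl_pHall _ h1).
  have c12 : Q :&: H \subset 'C(P :&: H).
    by apply: centsS (subsetIl _ _) (subset_trans (subsetIl _ _) cPQ).
  have aP1 : abelian (P :&: H) by apply: abelianS (subsetIl _ _) (cyclic_abelian cP).
  have sQH : Q \subset H.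
    apply: contraR nabH => nsQ.
    have aQ1 : abelian (Q :&: H).
      apply: (implyP (mQ (Q :&: H)%G)); rewrite /= properEneq subsetIl andbT.
      apply: contra nsQ => /eqP <-; exact: subsetIr.
    by rewrite -m12 abelianM aP1 aQ1 c12.
  have eQH : Q :&: H = Q by apply/setIidPl.
  split=> //; split.
    rewrite properEneq subsetIl andbT; apply/eqP => ePH.
    move: prH; rewrite properE => /andP [_]; case/negP.
    by rewrite -mPQ mulG_subG -ePH subsetIr sQH.
  have dH : (P :&: H) \x (Q :&: H) = H by rewrite dprodE.
  rewrite eQH in dH.
  rewrite -(dprod_exponent dH) (exponent_cyclic (cyclicS (subsetIl _ _) cP)).
  by rewrite dvdn_lcm dvdn_mulr ?dvdn_mull.
have eQ1 : exponent Q != 1%N.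
  apply: contra nabQ => /eqP eQ; have : (Q :==: 1) by rewrite trivg_exponent eQ.
  by move/eqP ->; rewrite abelian1.
rewrite /exponent_critical.
have [P1 | Pgt1] := leqP #|P| 1.
  rewrite big1; last first.
    move=> H /andP [prH nabH]; have [_ [prPH _]] := key H prH nabH.
    have := proper_card prPH; have := cardG_gt0 (P :&: H)%G.
    move: P1; rewrite /=; case: #|P| => [|[|]] //= _; case: #|_| => //.
  apply: contra eQ1 => /eqP eG; apply/eqP; apply/eqP; rewrite -dvdn1 -eG.
  by apply: exponentS; rewrite -mPQ mulG_subr.
set n := #|P| in Pgt1 *.
have nE : n = (p ^ logn p n)%N := card_pgroup pP.
set k := logn p n in nE.
have k0 : 0 < k by move: Pgt1; rewrite nE; case: (k) => //=; rewrite expn0.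
have npE : (n %/ p = p ^ k.-1)%N.
  by rewrite nE -(prednK k0) expnS mulKn ?prime_gt0 //= prednK.
have bnd : \big[lcmn/1%N]_(H : {group gT} | (H \proper G) && ~~ abelian H) exponent H
             %| (n %/ p) * exponent Q.
  apply: (big_ind (fun m => m %| (n %/ p) * exponent Q)) => //.
    by move=> a b ha hb; rewrite dvdn_lcm ha hb.
  move=> H /andP [prH nabH]; have [_ [prPH eH]] := key H prH nabH.
  apply: dvdn_trans eH _; apply: dvdn_mul => //.
  have pPH : p.-group (P :&: H) := pgroupS (subsetIl _ _) pP.
  rewrite (card_pgroup pPH) npE dvdn_exp2l //.
  have := proper_card prPH; rewrite (card_pgroup pPH) -/n nE ltn_exp2l ?prime_gt1 //.
  by rewrite pfactorK // => h; rewrite -ltnS prednK.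
apply/eqP => eG; move: bnd; rewrite -eG => bnd.
have : n %| exponent G by rewrite /n -(exponent_cyclic cP) exponentS // -mPQ mulG_subl.
move/dvdn_trans/(_ bnd).
have cop : coprime n (exponent Q) by apply: pnat_coprime pP _; rewrite pnat_exponent.
rewrite Gauss_dvdl // => /dvdn_leq.
have npos : 0 < n %/ p by rewrite npE expn_gt0 prime_gt0.
move/(_ npos); rewrite leqNgt ltn_Pdiv ?prime_gt1 //; exact: ltnW.
Qed.
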